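(* Let $p\in(0,1)$, $\beta\in\mathbb{R}$, $l\ge1$ and $1\le n\le l$ be fixed, let $\theta=0$ and $\alpha=\frac{k}{3^n}$ with $k\in\{0,\dots,3^n-1\}$. There exist functions $\phi_{p,\beta,\frac{k}{3^n},0}$ and $\psi_{p,\beta,\frac{k}{3^n},0}$ such that $H^{(l)}_{p,\beta,\frac{k}{3^n},0}$ is spectrally similar to $\Delta^{(l-n)}_p$ with respect to $\phi_{p,\beta,\frac{k}{3^n},0}$ and $\psi_{p,\beta,\frac{k}{3^n},0}$.
   Context: For $x\in\mathbb{Z}_+\setminus\{0\}$ let $m(x)$ be the largest integer $m\ge0$ with $3^m\mid x$. For $x\ge1$ set $p(x,x-1)=1-p,\ p(x,x+1)=p$ if $3^{-m(x)}x\equiv1\pmod3$, and $p(x,x-1)=p,\ p(x,x+1)=1-p$ if $3^{-m(x)}x\equiv2\pmod3$. Let $V_l=\{0,1,\dots,3^l\}$. The operator $H^{(l)}_{p,\beta,\alpha,\theta}$ acts on $f:V_l\to\mathbb{C}$ by $(H^{(l)}f)(0)=\beta\cos(\theta)f(0)-f(1)$, $(H^{(l)}f)(3^l)=\beta\cos(2\pi\alpha3^l+\theta)f(3^l)-f(3^l-1)$, and for $1\le x\le3^l-1$: $(H^{(l)}f)(x)=\beta\cos(2\pi\alpha x+\theta)f(x)-p(x,x-1)f(x-1)-p(x,x+1)f(x+1)$. The Laplacian $\Delta^{(j)}_p$ on $V_j$ is $(\Delta^{(j)}_pf)(0)=f(0)-f(1)$, $(\Delta^{(j)}_pf)(x)=f(x)-p(x,x-1)f(x-1)-p(x,x+1)f(x+1)$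 for $1\le x\le3^j-1$, $(\Delta^{(j)}_pf)(3^j)=f(3^j)-f(3^j-1)$. Spectral similarity: given Hilbert spaces $\mathcal{H}_0,\mathcal{H}$, an isometry $U:\mathcal{H}_0\to\mathcal{H}$ and bounded operators $H$ on $\mathcal{H}$, $H_0$ on $\mathcal{H}_0$, $H$ is spectrally similar to $H_0$ with functions $\phi,\psi$ if $U^*(H-z)^{-1}U=(\phi(z)H_0-\psi(z))^{-1}$ for all $z\in\mathbb{C}$ for which both sides are defined. Here $\mathcal{H}=\mathbb{C}^{V_l}$, $\mathcal{H}_0=\mathrm{span}\{\delta_v: v\equiv0 \pmod{3^n}\}\subset\mathcal{H}$ identified with $\mathbb{C}^{V_{l-n}}$ via $v\mapsto v/3^n$, and $U$ is the inclusion. *)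

(* Defs.v *)
From HB Require Import structures.
From mathcomp Require Import all_boot all_order all_algebra.
From mathcomp Require Import reals trigo.
From mathcomp Require Import complex.
Set Implicit Arguments. Unset Strict Implicit. Unset Printing Implicit Defensive.
Import Order.TTheory GRing.Theory Num.Theory ComplexField.
Local Open Scope ring_scope.
Local Open Scope complex_scope.

Section Defs.
Variable R : realType.

(* right-step probability at x >= 1: with m(x) = logn 3 x, the 3-free part
   x %/ 3^m(x) is 1 or 2 mod 3. *)
Definition pright (p : R) (x : nat) : R :=
  if ((x %/ 3 ^ logn 3 x) %% 3 == 1)%N then p else 1 - p.
Definition pleft (p : R) (x : nat) : R := 1 - pright p x.

Definition walk (p : R) (N x y : nat) : R :=
  if x == 0%N then (y == 1%N)%:R
  else if x == N then (y == N.-1)%:R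
  else if y == x.+1 then pright p x
  else if y.+1 == x then pleft p x
  else 0.

Definition Hop (p beta alpha theta : R) (l : nat) : 'M[R[i]]_((3 ^ l).+1) :=
  \matrix_(i, j)
    ((if i == j then beta * cos (2 * pi * alpha * (i : nat)%:R + theta) else 0)
     - walk p (3 ^ l) i j)%:C.

Definition Lap (p : R) (j : nat) : 'M[R[i]]_((3 ^ j).+1) :=
  \matrix_(x, y) ((x == y)%:R - walk p (3 ^ j) x y)%:C.

Definition incl (l n : nat) : 'M[R[i]]_((3 ^ l).+1, (3 ^ (l - n)).+1) :=
  \matrix_(x, y) ((x : nat) == 3 ^ n * y)%N%:R.

(* Spectral similarity (partial functions phi, psi given as option-valued):
   U^* (H - z)^{-1} U = (phi(z) H0 - psi(z))^{-1} whenever both sides are defined. *)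
Definition spectrally_similar (m k : nat) (U : 'M[R[i]]_(m, k))
  (H : 'M[R[i]]_m) (H0 : 'M[R[i]]_k) (phi psi : R[i] -> option R[i]) : Prop :=
  forall (z a b : R[i]), phi z = Some a -> psi z = Some b ->
    (H - z%:M) \in unitmx -> (a *: H0 - b%:M) \in unitmx ->
    (map_mx conjc U)^T *m invmx (H - z%:M) *m U = invmx (a *: H0 - b%:M).

End Defs.

(* Main.v *)
Require Import Defs.
From HB Require Import structures.
From mathcomp Require Import all_boot all_order all_algebra.
From mathcomp Require Import reals trigo.
From mathcomp Require Import complex.
From mathcomp Require Import zify ring.
From Stdlib Require Import Classical_Prop.
Import Order.TTheory GRing.Theory Num.Theory ComplexField.
Local Open Scope ring_scope.
Local Open Scope complex_scope.



Lemma decomp3 s : (0 < s)%N -> exists m t, s = (3 ^ m * t)%N /\ ~~ (3 %| t)%N.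
Proof.
move=> s0; exists (logn 3 s), (s %/ 3 ^ logn 3 s)%N.
have hd := pfactor_dvdnn 3 s.
split; first by rewrite mulnC divnK.
apply/negP => h3.
have t0 : (0 < s %/ 3 ^ logn 3 s)%N.
  by rewrite divn_gt0 ?expn_gt0 // dvdn_leq.
have := lognM 3 (expn_gt0 3 (logn 3 s)) t0.
rewrite mulnC divnK // lognX (logn_prime _ (isT : prime 3)) eqxx muln1.
move=> /eqP; rewrite -{1}(addn0 (logn 3 s)) eqn_add2l eq_sym => /eqP h.
by move: h3; rewrite -(expn1 3) pfactor_dvdn // h.
Qed.

Lemma logn3_mul (m t : nat) : ~~ (3 %| t)%N -> logn 3 (3 ^ m * t) = m /\ ((3 ^ m * t) %/ 3 ^ m = t)%N.
Proof.
move=> ht.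
have t0 : (0 < t)%N by rewrite lt0n; apply: contraNneq ht => ->.
rewrite lognM ?expn_gt0 // lognX (logn_prime _ (isT : prime 3)) eqxx muln1.
rewrite logn_coprime ?prime_coprime // addn0; split=> //.
by rewrite mulKn ?expn_gt0.
Qed.

Section P.
Variable R : realType.
Variable p : R.

Lemma pright_mul3 m t : ~~ (3 %| t)%N ->
  pright p (3 ^ m * t) = if (t %% 3 == 1)%N then p else 1 - p.
Proof. by move=> ht; rewrite /pright; case: (@logn3_mul m t ht) => -> ->. Qed.

Lemma pright_scale n q : (0 < q)%N -> pright p (3 ^ n * q) = pright p q.
Proof.
move=> /decomp3 [m [t [-> ht]]].
by rewrite mulnA -expnD !pright_mul3.
Qed.

Lemma lt_exp3 m n t : (0 < t)%N -> (3 ^ m * t < 3 ^ n)%N -> (m < n)%N.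
Proof.
move=> t0 h; rewrite -(ltn_exp2l _ _ (isT : (1 < 3)%N)).
by apply: leq_ltn_trans h; rewrite leq_pmulr.
Qed.

Lemma pright_per n q r : (0 < r < 3 ^ n)%N -> pright p (3 ^ n * q + r) = pright p r.
Proof.
case/andP=> /decomp3 [m [t [-> ht]]] hlt.
have t0 : (0 < t)%N by rewrite lt0n; apply: contraNneq ht => ->.
have mn := @lt_exp3 m n t t0 hlt.
have -> : (3 ^ n * q + 3 ^ m * t = 3 ^ m * (3 * (3 ^ (n - m.+1) * q) + t))%N.
  by rewrite mulnDr !mulnA -expnSr -expnD subnKC.
have h3 : ~~ (3 %| 3 * (3 ^ (n - m.+1) * q) + t)%N by rewrite dvdn_addr ?dvdn_mulr.
rewrite !pright_mul3 //.
by rewrite -modnDm modnMr add0n modn_mod.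
Qed.

Lemma pright_refl n s : (0 < s < 3 ^ n)%N -> pright p (3 ^ n - s) = 1 - pright p s.
Proof.
case/andP=> /decomp3 [m [t [-> ht]]] hlt.
have t0 : (0 < t)%N by rewrite lt0n; apply: contraNneq ht => ->.
have mn := @lt_exp3 m n t t0 hlt.
set c := (3 ^ (n - m.+1))%N.
have e3 : (3 ^ n = 3 ^ m * (3 * c))%N by rewrite /c mulnA -expnSr -expnD subnKC.
have tl : (t < 3 * c)%N by move: hlt; rewrite e3 ltn_pmul2l ?expn_gt0.
have hm := divn_eq t 3.
have hr : (t %% 3 < 3)%N by rewrite ltn_mod.
have hr0 : (t %% 3 != 0)%N by move: ht; rewrite /dvdn.
set d := (t %/ 3)%N in hm; set e := (t %% 3)%N in hm hr hr0 *.
have -> : (3 ^ n - 3 ^ m * t = 3 ^ m * (3 * (c - d).-1 + (3 - e)))%N.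
  rewrite e3 -mulnBr; congr (_ * _)%N; clear -tl hm hr hr0; lia.
have h3e : ~~ (3 %| (3 * (c - d).-1 + (3 - e)))%N.
  rewrite dvdn_addr ?dvdn_mulr //; apply/negP=> /dvdn_leq; clear -hr hr0; lia.
rewrite !pright_mul3 // -modnDm modnMr add0n modn_mod modn_small; last by clear -hr hr0; lia.
have : (e == 1 \/ e == 2)%N by clear -hr hr0; lia.
rewrite -/e; case=> /eqP -> /=; [done | by rewrite opprB addrC subrK].
Qed.
End P.



Section Q.
Variable R : realType.

Lemma cos_addn (x : R) m : cos (x + (pi *+ 2) * m%:R) = cos x.
Proof.
elim: m => [|m IH]; first by rewrite mulr0 addr0.
by rewrite -[m.+1]addn1 natrD mulrDr mulr1 addrA cosD2pi.
Qed.

Lemma walk_split (p : R) P x y : (0 < P)%N ->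
  walk p P x y = (y == x.+1)%:R * walk p P x x.+1 + (y == x.-1)%:R * walk p P x x.-1.
Proof.
move=> P0; rewrite /walk.
case: (x =P 0%N) => [->|/eqP x0].
  by rewrite /= mulr1 mulr0 addr0.
have x0' : (x == 0%N) = false by apply/negbTE.
case: (x =P P) => [xP|/eqP xP].
  have h1 : (x.+1 == x.-1) = false by lia.
  have h2 : (x.+1 == P.-1) = false by rewrite -xP; lia.
  by rewrite -xP eqxx h1 mulr0 add0r mulr1.
have xP' : (x == P) = false by apply/negbTE.
have h3 : (x.-1 == x.+1) = false by lia.
have h4 : (x.-1.+1 == x) by lia.
rewrite eqxx h3 h4 /=.
case: (y =P x.+1) => [->|/eqP yx1].
  have -> : (x.+1 == x.-1) = false by lia.
  by rewrite mul0r addr0 mul1r.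
rewrite mul0r add0r.
case: (y =P x.-1) => [->|/eqP yx]; first by rewrite h4 mul1r.
have -> : (y.+1 == x) = false by lia.
by rewrite mul0r.
Qed.
End Q.



Lemma sum_delta (C : pzRingType) m x (F : nat -> C) :
  \sum_(j < m) ((j : nat) == x)%:R * F j = (x < m)%:R * F x.
Proof.
case: (ltnP x m) => hx.
  rewrite (bigD1 (Ordinal hx)) //= eqxx mul1r big1 ?addr0 ?mul1r // => j hj.
  by rewrite (_ : (j : nat) == x = false) ?mul0r //; apply/negbTE; apply: contra hj => /eqP h; apply/eqP/val_inj.
rewrite mul0r big1 // => j _.
by rewrite (_ : (j : nat) == x = false) ?mul0r //; apply/negbTE; rewrite neq_ltn (leq_trans (ltn_ord j) hx).
Qed.

Section Main.
Variables (R : realType) (p beta : R) (l n k : nat).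
Hypothesis hn : (1 <= n <= l)%N.

Local Notation N := (3 ^ n)%N.
Local Notation K := (3 ^ (l - n))%N.
Local Notation L := (3 ^ l)%N.
Local Notation N1 := (3 ^ n).-1.
Local Notation C := (R[i]).

Lemma LNK : L = (N * K)%N.
Proof. by rewrite -expnD subnKC //; case/andP: hn. Qed.

Definition alpha : R := k%:R / N%:R.
Definition hR (x : nat) : R := beta * cos (2 * pi * alpha * x%:R + 0).
Definition wC (P x y : nat) : C := (walk p P x y)%:C.

Lemma wC_split P x y : (0 < P)%N ->
  wC P x y = (y == x.+1)%:R * wC P x x.+1 + (y == x.-1)%:R * wC P x x.-1.
Proof.
by move=> P0; rewrite /wC (@walk_split R p P x y P0) rmorphD !rmorphM !rmorph_nat.
Qed.

Lemma Hop_E (i j : 'I_L.+1) :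
  Hop p beta alpha 0 l i j = ((i : nat) == j)%:R * (hR i)%:C - wC L i j.
Proof.
rewrite mxE rmorphB /wC /hR; congr (_ - _).
by case: eqP => [->|]; rewrite ?eqxx ?mul1r ?mul0r //; move=> h; rewrite (_ : (i : nat) == j = false) ?mul0r //; apply/negbTE; apply: contra_not_neq h => /val_inj.
Qed.

Lemma Lap_E (i j : 'I_K.+1) :
  Lap p (l - n) i j = ((i : nat) == j)%:R - wC K i j.
Proof. by rewrite mxE rmorphB rmorph_nat. Qed.

Lemma incl_E x y : incl R l n x y = ((x : nat) == N * y)%:R.
Proof. by rewrite mxE. Qed.

Definition B0 : 'M[C]_N1 :=
  \matrix_(i, j) (((i : nat) == j)%:R * (hR i.+1)%:C - wC L i.+1 j.+1).
Definition cvec : 'cV[C]_N1 := \col_i (((i : nat) == 0)%:R * wC L 1 0).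
Definition vv (z : C) := invmx (B0 - z%:M) *m cvec.
Definition vf (z : C) (j : nat) : C :=
  if (insub j : option 'I_N1) is Some i then vv z i 0 else 0.
Definition u (z : C) (r : nat) : C := if r == 0%N then 1 else vf z r.-1.

Lemma vf_ord z (i : 'I_N1) : vf z i = vv z i 0.
Proof. by rewrite /vf valK. Qed.

Lemma vf_ge z j : (N1 <= j)%N -> vf z j = 0.
Proof. by move=> h; rewrite /vf insubN // -leqNgt. Qed.

Lemma vf_ind z j : (j < N1)%:R * vf z j = vf z j.
Proof. case: (ltnP j N1) => h; first by rewrite /= mulr1n mul1r. by rewrite vf_ge // mulr0. Qed.

Lemma u_ge z r : (N <= r)%N -> u z r = 0.
Proof.
move=> h; rewrite /u; case: eqP => [r0|_]; first by move: h; rewrite r0 leqn0 expn_eq0.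
by rewrite vf_ge //; lia.
Qed.

Lemma sum_deltaS (m x : nat) (F : nat -> C) :
  \sum_(j < m) (((j : nat).+1 == x)%:R * F j) = (0 < x)%:R * ((x.-1 < m)%:R * F x.-1).
Proof.
case: x => [|x]; last by rewrite /= mulr1n mul1r -(@sum_delta C m x F); apply: eq_bigr => j _; rewrite eqSS.
by rewrite /= ?mulr0n ?mul0r big1 // => j _; rewrite /= ?mulr0n ?mul0r.
Qed.

Lemma L0 : (0 < L)%N. Proof. by rewrite expn_gt0. Qed.

Lemma u_eq z : (B0 - z%:M) \in unitmx -> forall r, (0 < r < N)%N ->
  ((hR r)%:C - z) * u z r - wC L r r.+1 * u z r.+1 - wC L r r.-1 * u z r.-1 = 0.
Proof.
move=> hU r /andP[r0 rN].
have E := mulKVmx hU cvec.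
case: r r0 rN => [//|i] _ rN.
have hi : (i < N1)%N by lia.
have S : forall j : 'I_N1, (B0 - z%:M) (Ordinal hi) j * vf z j =
   ((j : nat) == i)%:R * (((hR i.+1)%:C - z) * vf z j)
   - ((j : nat) == i.+1)%:R * (wC L i.+1 i.+2 * vf z j)
   - ((j : nat).+1 == i)%:R * (wC L i.+1 i * vf z j).
  move=> j; rewrite !mxE (wC_split _ _ _ L0) eqSS /=.
  have -> : (Ordinal hi == j) = ((j : nat) == i) by rewrite eq_sym.
  rewrite -(mulr_natl z) (eq_sym i); ring.
have := congr1 (fun M : 'cV_N1 => M (Ordinal hi) 0) E.
rewrite mxE.
under eq_bigr => j _ do rewrite -vf_ord S.
rewrite !sumrB (@sum_delta C N1 i (fun j => ((hR i.+1)%:C - z) * vf z j)).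
rewrite (@sum_delta C N1 i.+1 (fun j => wC L i.+1 i.+2 * vf z j)).
rewrite (@sum_deltaS N1 i (fun j => wC L i.+1 i * vf z j)) mxE /=.
have e1 : (i.+1 < N1)%:R * (wC L i.+1 i.+2 * vf z i.+1) = wC L i.+1 i.+2 * vf z i.+1 by rewrite mulrCA vf_ind.
have e2 : (i.-1 < N1)%:R * (wC L i.+1 i * vf z i.-1) = wC L i.+1 i * vf z i.-1 by rewrite mulrCA vf_ind.
rewrite hi e1 e2 /u /= => /eqP; rewrite -subr_eq0 => /eqP H.
case: i {hi S e1 e2 rN} H => [|i] /= H; rewrite -[RHS]H; ring.
Qed.


Lemma N0 : (N%:R : R) != 0.
Proof. by rewrite pnatr_eq0 expn_eq0. Qed.

Lemma hR_per q r : hR (N * q + r) = hR r.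
Proof.
rewrite /hR /alpha; congr (_ * _); rewrite !addr0 -[X in _ = X](@cos_addn R _ (k * q)%N); congr cos.
rewrite natrD !natrM mulr2n; field; exact: N0.
Qed.

Lemma hR_refl s : (s <= N)%N -> hR (N - s) = hR s.
Proof.
move=> hs; rewrite /hR /alpha; congr (_ * _); rewrite !addr0 -[X in _ = X]cosN -[X in _ = X](@cos_addn R _ k); congr cos.
rewrite natrB // mulr2n; field; exact: N0.
Qed.

Lemma hR_0 q : hR (N * q) = beta.
Proof.
by rewrite -[(N * q)%N]addn0 hR_per /hR mulr0 addr0 cos0 mulr1.
Qed.

Lemma wC_int_r P x : (0 < x < P)%N -> wC P x x.+1 = (pright p x)%:C.
Proof.
case/andP=> x0 xP; rewrite /wC /walk.
have -> : (x == 0%N) = false by lia.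
have -> : (x == P) = false by lia.
by rewrite eqxx.
Qed.

Lemma wC_int_l P x : (0 < x < P)%N -> wC P x x.-1 = (1 - pright p x)%:C.
Proof.
case/andP=> x0 xP; rewrite /wC /walk.
have -> : (x == 0%N) = false by lia.
have -> : (x == P) = false by lia.
have -> : (x.-1 == x.+1) = false by lia.
have -> : (x.-1.+1 == x) = true by lia.
by [].
Qed.

Lemma wC_00 P : wC P 0 0 = 0.
Proof. by rewrite /wC /walk /= rmorph0. Qed.

Lemma wC_01 P : wC P 0 1 = 1.
Proof. by rewrite /wC /walk /= rmorph1. Qed.

Lemma wC_top P : (0 < P)%N -> wC P P P.+1 = 0.
Proof.
move=> P0; rewrite /wC /walk.
have -> : (P == 0%N) = false by lia.
have -> : (P.+1 == P.-1) = false by lia.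
by rewrite eqxx rmorph0.
Qed.

Lemma wC_topl P : (0 < P)%N -> wC P P P.-1 = 1.
Proof.
move=> P0; rewrite /wC /walk.
have -> : (P == 0%N) = false by lia.
by rewrite !eqxx rmorph1.
Qed.

Lemma wC_ind x : (x <= L)%N -> (x.+1 < L.+1)%:R * wC L x x.+1 = wC L x x.+1.
Proof.
move=> h; case: (ltnP x.+1 L.+1) => h2; first by rewrite /= mulr1n mul1r.
have -> : x = L by lia.
by rewrite wC_top ?mulr0 // L0.
Qed.

Lemma K0 : (0 < K)%N. Proof. by rewrite expn_gt0. Qed.

Lemma wC_coarse_r q : (q <= K)%N -> wC L (N * q) (N * q).+1 = wC K q q.+1.
Proof.
move=> hq; case: (posnP q) => [->|q0]; first by rewrite muln0 !wC_01.
have [qK|qK|->] := ltngtP q K; last by rewrite -LNK !wC_top ?L0 ?K0.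
  2: by move: qK; rewrite ltnNge hq.
have hL : (0 < N * q < L)%N.
  by apply/andP; split; [rewrite muln_gt0 expn_gt0 q0 | rewrite LNK ltn_pmul2l ?expn_gt0].
by rewrite !wC_int_r ?q0 ?qK // pright_scale.
Qed.

Lemma wC_coarse_l q : (q <= K)%N -> wC L (N * q) (N * q).-1 = wC K q q.-1.
Proof.
move=> hq; case: (posnP q) => [->|q0]; first by rewrite muln0 !wC_00.
have [qK|qK|->] := ltngtP q K; last by rewrite -LNK !wC_topl ?L0 ?K0.
  2: by move: qK; rewrite ltnNge hq.
have hL : (0 < N * q < L)%N.
  by apply/andP; split; [rewrite muln_gt0 expn_gt0 q0 | rewrite LNK ltn_pmul2l ?expn_gt0].
by rewrite !wC_int_l ?q0 ?qK // pright_scale.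
Qed.

Lemma wK_sum q : (q <= K)%N -> wC K q q.+1 + wC K q q.-1 = 1.
Proof.
move=> hq; case: (posnP q) => [->|q0]; first by rewrite wC_01 wC_00 addr0.
have [qK|qK|->] := ltngtP q K; last by rewrite wC_top ?wC_topl ?K0 // add0r.
  2: by move: qK; rewrite ltnNge hq.
by rewrite wC_int_r ?wC_int_l ?q0 ?qK // -rmorphD addrC subrK rmorph1.
Qed.

Definition Xf (z : C) (x y : nat) : C :=
  if (N * y <= x)%N then u z (x - N * y) else u z (N * y - x).

Lemma u0 z : u z 0 = 1. Proof. by []. Qed.

Lemma N_gt0 : (0 < N)%N. Proof. by rewrite expn_gt0. Qed.

Lemma Xf_eq z q r y : (r <= N)%N ->
  Xf z (N * q + r) y = (y == q)%:R * u z r + (y == q.+1)%:R * u z (N - r).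
Proof.
move=> hr; rewrite /Xf; have N0' := N_gt0.
have [ylt|ygt|->] := ltngtP y q.
- have h : (N * y + N <= N * q)%N by rewrite addnC -mulnS leq_mul2l ylt orbT.
  have -> : (N * y <= N * q + r)%N by lia.
  have -> : (y == q.+1) = false by lia.
  by rewrite u_ge ?mul0r ?addr0 //; lia.
- case: (y =P q.+1) => [->|/eqP yq].
    rewrite mulnS /= mul0r add0r mul1r.
    case: (ltngtP r N) => [rN|//|->].
    + have -> : (N + N * q <= N * q + r)%N = false by lia.
      congr u; lia.
    + by move=> h; move: hr; rewrite leqNgt h.
    + have -> : (N + N * q <= N * q + N)%N by lia.
      congr u; lia.
  have h : (N * q.+2 <= N * y)%N by rewrite leq_mul2l; apply/orP; right; lia.
  rewrite !mulnS in h.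
  have -> : (N * y <= N * q + r)%N = false by lia.
  by rewrite u_ge ?mul0r ?addr0 //; lia.
- rewrite leq_addr /=.
  have -> : (q == q.+1) = false by lia.
  by rewrite mul0r addr0 mul1r; congr u; lia.
Qed.

Lemma Xf_coarse z q y : Xf z (N * q) y = (y == q)%:R.
Proof.
by rewrite -[(N * q)%N]addn0 Xf_eq // subn0 u0 (@u_ge z N (leqnn N)) mulr1 mulr0 addr0.
Qed.

Definition Hm := Hop p beta alpha 0 l.
Definition aa z := u z N1.
Definition bb z := aa z - beta%:C + z + u z 1.
Definition Xm z : 'M[C]_(L.+1, K.+1) := \matrix_(x, y) Xf z x y.
Definition Ym z : 'M[C]_K.+1 := aa z *: Lap p (l - n) - (bb z)%:M.
Definition Yf z (q j : nat) : C := aa z * ((q == j)%:R - wC K q j) - bb z * (q == j)%:R.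

Lemma LHS_entry z (x : 'I_L.+1) (j : 'I_K.+1) :
  ((Hm - z%:M) *m Xm z) x j =
  ((hR x)%:C - z) * Xf z x j - wC L x x.+1 * Xf z x.+1 j - wC L x x.-1 * Xf z x.-1 j.
Proof.
have S : forall y : 'I_L.+1, (Hm - z%:M) x y * Xm z y j =
   ((y : nat) == x)%:R * (((hR x)%:C - z) * Xf z y j)
   - ((y : nat) == x.+1)%:R * (wC L x x.+1 * Xf z y j)
   - ((y : nat) == x.-1)%:R * (wC L x x.-1 * Xf z y j).
  move=> y; rewrite mxE [Hm x y]Hop_E !mxE (wC_split _ _ _ L0).
  have -> : (x == y) = ((y : nat) == x) by rewrite eq_sym.
  rewrite -(mulr_natl z) (eq_sym (x : nat)); ring.
rewrite mxE; under eq_bigr => y _ do rewrite S.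
rewrite !sumrB (@sum_delta C L.+1 x (fun y => ((hR x)%:C - z) * Xf z y j)).
rewrite (@sum_delta C L.+1 x.+1 (fun y => wC L x x.+1 * Xf z y j)).
rewrite (@sum_delta C L.+1 x.-1 (fun y => wC L x x.-1 * Xf z y j)).
have hx : (x <= L)%N by rewrite -ltnS.
have -> : (x < L.+1)%N by [].
have -> : (x.-1 < L.+1)%N by lia.
by rewrite /= !mulr1n !mul1r mulrA (@wC_ind x hx).
Qed.

Lemma Ym_E z (y j : 'I_K.+1) : Ym z y j = Yf z y j.
Proof.
rewrite !mxE /Yf /wC rmorphB rmorph_nat.
by rewrite -(mulr_natl (bb z)) [_ * bb z]mulrC.
Qed.

Lemma RHS_entry z (x : 'I_L.+1) (j : 'I_K.+1) :
  (incl R l n *m Ym z) x j = if (N %| x)%N then Yf z (x %/ N) j else 0.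
Proof.
rewrite mxE; under eq_bigr => y _ do rewrite incl_E Ym_E.
case: ifP => hd.
  have hx : (x %/ N <= K)%N.
    by rewrite leq_divLR ?N_gt0 // mulnC -LNK -ltnS.
  have ex : (x : nat) = (N * (x %/ N))%N by rewrite mulnC divnK.
  under eq_bigr => y _ do rewrite ex eqn_pmul2l ?N_gt0 // eq_sym.
  rewrite (@sum_delta C K.+1 (x %/ N)%N (fun y => Yf z y j)).
  by rewrite ltnS hx /= mulr1n mul1r.
rewrite big1 // => y _.
have -> : ((x : nat) == N * y)%N = false.
  by apply/negbTE; apply: contraFN hd => /eqP ->; rewrite dvdn_mulr.
by rewrite mul0r.
Qed.

Lemma combA (h z d1 d2 pr u0 u1 u2 v0 v1 v2 : C) :
 (h - z) * u1 - pr * u2 - (1 - pr) * u0 = 0 ->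
 (h - z) * v1 - (1 - pr) * v2 - (1 - (1 - pr)) * v0 = 0 ->
 (h - z) * (d1 * u1 + d2 * v1) - pr * (d1 * u2 + d2 * v0) - (1 - pr) * (d1 * u0 + d2 * v2) = 0.
Proof.
move=> e1 e2.
have -> : (h - z) * (d1 * u1 + d2 * v1) - pr * (d1 * u2 + d2 * v0) - (1 - pr) * (d1 * u0 + d2 * v2)
  = d1 * ((h - z) * u1 - pr * u2 - (1 - pr) * u0) + d2 * ((h - z) * v1 - (1 - pr) * v2 - (1 - (1 - pr)) * v0) by ring.
by rewrite e1 e2 !mulr0 addr0.
Qed.

Lemma NL : (N <= L)%N.
Proof. by rewrite LNK leq_pmulr ?K0. Qed.

Lemma pointwise z (hU : B0 - z%:M \in unitmx) (x j : nat) : (x <= L)%N ->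
  ((hR x)%:C - z) * Xf z x j - wC L x x.+1 * Xf z x.+1 j - wC L x x.-1 * Xf z x.-1 j
  = if (N %| x)%N then Yf z (x %/ N) j else 0.
Proof.
have [q [r [-> rN]]] : exists q r, x = (N * q + r)%N /\ (r < N)%N.
  by exists (x %/ N)%N, (x %% N)%N; rewrite {1}(divn_eq x N) mulnC ltn_mod N_gt0.
move=> hx.
case: (posnP r) => [r0|r0].
- subst r; rewrite addn0 dvdn_mulr // mulKn ?N_gt0 //.
  have hq : (q <= K)%N by move: hx; rewrite addn0 LNK leq_pmul2l ?N_gt0.
  rewrite hR_0 Xf_coarse wC_coarse_r // wC_coarse_l // -[(N * q).+1]addn1 Xf_eq ?N_gt0 //.
  rewrite /Yf (wC_split K q j K0) /bb /aa.
  have wl : wC K q q.-1 = 1 - wC K q q.+1 by rewrite -(@wK_sum q hq) addrC addKr.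
  have -> : (N - 1 = N1)%N by rewrite subn1.
  case: q hq wl {hx} => [|q] hq wl.
    rewrite muln0 /= wC_00 (eq_sym 0%N j) wC_01 !mul0r !mulr0 !subr0 !mul1r.
    by move: ((j == 0%N)%:R : C) ((j == 1%N)%:R : C) => d0 d1; ring.
  have -> : (N * q.+1).-1 = (N * q + N1)%N by rewrite mulnS; have := N_gt0; lia.
  rewrite Xf_eq ?leq_pred //= wl.
  have -> : (N - N1 = 1)%N by have := N_gt0; lia.
  rewrite (eq_sym q.+1 j); ring.
- have nd : (N %| N * q + r)%N = false.
    by rewrite dvdn_addr ?dvdn_mulr // /dvdn modn_small //; lia.
  rewrite nd.
  have xL : (0 < N * q + r < L)%N.
    apply/andP; split; first by lia.
    have : (N * q + r != L)%N.
      apply/negP => /eqP e.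
      have : ((N * q + r) %% N = 0)%N by rewrite e LNK modnMr.
      by rewrite -modnDm modnMr add0n modn_mod modn_small //; lia.
    by move: hx; rewrite leq_eqVlt => /orP [->|].
  have rL : (0 < r < L)%N by have := NL; lia.
  have rL' : (0 < N - r < L)%N by have := NL; lia.
  have rr : (0 < r < N)%N by lia.
  have rr' : (0 < N - r < N)%N by lia.
  have E1 := @u_eq z hU r rr.
  have E2 := @u_eq z hU (N - r)%N rr'.
  rewrite hR_refl ?(ltnW rN) // wC_int_r // wC_int_l // pright_refl // in E2.
  have ea : ((N - r).+1 = N - r.-1)%N by lia.
  have eb : ((N - r).-1 = N - r.+1)%N by lia.
  rewrite ea eb in E2.
  rewrite wC_int_r // wC_int_l // in E1.
  rewrite hR_per wC_int_r // wC_int_l // pright_per //.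
  rewrite Xf_eq ?(ltnW rN) // -addnS Xf_eq //.
  have -> : (N * q + r).-1 = (N * q + r.-1)%N by lia.
  rewrite Xf_eq; last by lia.
  rewrite !rmorphB !rmorph1 in E1 E2 *.
  exact: combA E1 E2.
Qed.

Lemma main_eq z : B0 - z%:M \in unitmx -> (Hm - z%:M) *m Xm z = incl R l n *m Ym z.
Proof.
move=> hU; apply/matrixP => x j; rewrite LHS_entry RHS_entry.
by apply: pointwise; rewrite // -ltnS.
Qed.

Lemma left_inv z : (map_mx conjc (incl R l n))^T *m Xm z = 1%:M.
Proof.
apply/matrixP => i j; rewrite !mxE.
under eq_bigr => x _ do rewrite !mxE conjc_nat.
rewrite (@sum_delta C L.+1 (N * i)%N (fun x => Xf z x j)) Xf_coarse.
have -> : (N * i < L.+1)%N.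
  by rewrite ltnS LNK leq_pmul2l ?N_gt0 // -ltnS.
by rewrite /= mulr1n mul1r eq_sym.
Qed.

End Main.



Lemma roots_fin (F : idomainType) (q : {poly F}) : q != 0 ->
  exists s : seq F, forall z, root q z -> z \in s.
Proof.
elim: (size q) {-2}q (leqnn (size q)) => [|m IH] q' hq q0.
  by move: q0; rewrite -size_poly_eq0; move: hq; rewrite leqn0 => ->.
have [[x rx]|nr] := classic (exists x, root q' x); last first.
  by exists [::] => z rz; case: nr; exists z.
case/factor_theorem: rx => r er.
have r0 : r != 0 by apply: contraNneq q0 => r0; rewrite er r0 mul0r.
have hs : (size r <= m)%N.
  move: hq; rewrite er size_mul ?polyXsubC_eq0 // size_XsubC addn2 /=.
  by rewrite ltnS.
have [s hs'] := IH r hs r0.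
exists (x :: s) => z; rewrite er rootM root_XsubC in_cons => /orP [/hs' ->|->].
  by rewrite orbT.
by [].
Qed.

Lemma finite_nonunit (F : fieldType) m (A : 'M[F]_m) :
  exists s : seq F, forall z, (A - z%:M) \notin unitmx -> z \in s.
Proof.
have [s hs] := @roots_fin F _ (monic_neq0 (char_poly_monic A)).
exists s => z hz; apply: hs; rewrite -eigenvalue_root_char.
by rewrite /eigenvalue /eigenspace kermx_eq0 row_free_unit.
Qed.

Theorem lemma3p4 (R : realType) (p beta : R) (l n k : nat) :
  0 < p < 1 -> (1 <= l)%N -> (1 <= n <= l)%N -> (k < 3 ^ n)%N ->
  exists phi psi : R[i] -> option R[i],
    spectrally_similar (incl R l n)
      (Hop p beta (k%:R / (3 ^ n)%:R) 0 l) (Lap p (l - n)) phi psi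
    /\ (* non-degeneracy: both sides are defined outside a finite set of z *)
    (exists S : seq R[i], forall z : R[i], z \notin S ->
       exists a b : R[i], [/\ phi z = Some a, psi z = Some b,
         (Hop p beta (k%:R / (3 ^ n)%:R) 0 l - z%:M) \in unitmx
         & (a *: Lap p (l - n) - b%:M) \in unitmx]).
Proof.
move=> _ _ hn _.
pose B := B0 R p beta l n k.
pose phi := fun z : R[i] => if (B - z%:M) \in unitmx then Some (aa R p beta l n k z) else None.
pose psi := fun z : R[i] => if (B - z%:M) \in unitmx then Some (bb R p beta l n k z) else None.
have key : forall z, (B - z%:M) \in unitmx ->
    (Hm R p beta l n k - z%:M) \in unitmx ->
    (map_mx conjc (incl R l n))^T *m invmx (Hm R p beta l n k - z%:M) *m incl R l n
      *m Ym R p beta l n k z = 1%:M.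
  move=> z hU hH.
  have ME := @main_eq R p beta l n k hn z hU.
  rewrite -!mulmxA -ME mulKmx //.
  exact: (@left_inv R p beta l n k hn z).
exists phi, psi; split.
  move=> z a b; rewrite /phi /psi; case: ifP => hU // [<-] [<-] hH hY.
  have W := key z hU hH.
  have := mulmxK hY ((map_mx conjc (incl R l n))^T *m
        invmx (Hm R p beta l n k - z%:M) *m incl R l n).
  by rewrite /Ym in W; rewrite W mul1mx => <-.
have [s1 h1] := @finite_nonunit _ _ (Hm R p beta l n k).
have [s2 h2] := @finite_nonunit _ _ B.
exists (s1 ++ s2) => z; rewrite mem_cat negb_or => /andP [n1 n2].
have hH : (Hm R p beta l n k - z%:M) \in unitmx.
  by apply: contraR n1 => /h1.
have hU : (B - z%:M) \in unitmx.
  by apply: contraR n2 => /h2.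
exists (aa R p beta l n k z), (bb R p beta l n k z).
rewrite /phi /psi hU; split=> //.
have [_ ] := mulmx1_unit (key z hU hH).
by [].
Qed.
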